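(* Let $n\ge1$, let $G^\star=([n],E^\star)$ be a directed graph (directed cycles allowed), let $t\ge1$ and let $(a_0,a_1,\dots,a_{t+1})\in[n]^{t+2}$ be such that $a_i$ and $a_{i+1}$ are $p$-adjacent in $G^\star$ for all $i\in\{0,\dots,t\}$, and $a_i$ and $a_j$ are not $p$-adjacent in $G^\star$ for all $i\in\{2,\dots,t+1\}$ and $j\in\{0,\dots,i-2\}$. Then at least one of the following holds: (1) each of $a_1,\dots,a_t$ is an ancestor of $a_0$ or of $a_{t+1}$ in $G^\star$; or (2) there exist $j,\ell\in\{1,\dots,t\}$ with $j\le\ell$ such that $(a_{j-1},a_j,a_{j+1})$ and $(a_{\ell-1},a_\ell,a_{\ell+1})$ are mutually exclusive with respect to the uncovered itinerary $(a_{j-1},a_j,\dots,a_{\ell+1})$ in $G^\star$.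
   Context: In a directed graph $G$, $a$ is an ancestor of $b$ if $a=b$ or there is a directed path from $a$ to $b$. Distinct vertices $a,b$ are $p$-adjacent in $G$ if there is an edge between them (in either direction), or $a$ and $b$ have a common child in $G$ that is an ancestor of $a$ or of $b$. For $s\ge1$ and vertices $b_0,b_1,\dots,b_{s+1}$, the triples $(b_0,b_1,b_2)$ and $(b_{s-1},b_s,b_{s+1})$ are mutually exclusive with respect to the uncovered itinerary $(b_0,\dots,b_{s+1})$ in $G$ if: $b_i$ and $b_{i-1}$ are $p$-adjacent for all $i\in\{1,\dots,s+1\}$; $b_i$ and $b_j$ are not $p$-adjacent for all $i\in\{2,\dots,s+1\}$, $j\in\{0,\dots,i-2\}$; $b_i$ is an ancestor of $b_{i+1}$ for all $i\in\{1,\dots,s-1\}$; $b_i$ is an ancestor of $b_{i-1}$ for all $i\in\{2,\dots,s\}$; and $b_1$ is an ancestor of neither $b_0$ nor $b_{s+1}$. *)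

(* Defs.v *)
From mathcomp Require Import all_boot.
Set Implicit Arguments. Unset Strict Implicit. Unset Printing Implicit Defensive.

(* A directed graph on vertex set [n] = 'I_n is an edge relation E : rel 'I_n
   (E x y means there is an edge x -> y). *)

Definition ancestor (n : nat) (E : rel 'I_n) (a b : 'I_n) : bool := connect E a b.

Definition padj (n : nat) (E : rel 'I_n) (a b : 'I_n) : bool :=
  (a != b) &&
  [|| E a b, E b a |
      [exists c : 'I_n, [&& E a c, E b c & ancestor E c a || ancestor E c b]]].

(* The triples (b0,b1,b2) and (b_{s-1},b_s,b_{s+1}) are mutually exclusive
   with respect to the uncovered itinerary (b 0, ..., b (s+1)); s >= 1. *)
Definition mut_excl (n : nat) (E : rel 'I_n) (b : nat -> 'I_n) (s : nat) : Prop :=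
  1 <= s /\
  [/\ (forall i, 1 <= i <= s.+1 -> padj E (b i) (b i.-1)),
      (forall i j, 2 <= i <= s.+1 -> j <= i - 2 -> ~~ padj E (b i) (b j)),
      (forall i, 1 <= i <= s - 1 -> ancestor E (b i) (b i.+1)),
      (forall i, 2 <= i <= s -> ancestor E (b i) (b i.-1)) &
      (~~ ancestor E (b 1) (b 0) /\ ~~ ancestor E (b 1) (b s.+1))].

(* Main.v *)
Require Import Defs.
From mathcomp Require Import all_boot.
From mathcomp Require Import zify.
From Stdlib Require Import Classical.
Set Implicit Arguments. Unset Strict Implicit.

Lemma padj_sym n (E : rel 'I_n) x y : padj E x y -> padj E y x.
Proof.
rewrite /padj => /andP[ne H]; apply/andP; split; first by rewrite eq_sym.
case/or3P: H => [->|->|/existsP[c /and3P[h1 h2 h3]]]; rewrite ?orbT //.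
apply/or3P; apply: Or33; apply/existsP; exists c; rewrite h1 h2 /=.
by rewrite orbC.
Qed.

Lemma padj_anc n (E : rel 'I_n) x y : padj E x y -> ancestor E x y \/ ancestor E y x.
Proof.
rewrite /padj /ancestor => /andP[_ H].
case/or3P: H => [h|h|/existsP[c /and3P[h1 h2 /orP[h3|h3]]]].
- by left; apply: connect1.
- by right; apply: connect1.
- by right; apply: connect_trans (connect1 h2) h3.
- by left; apply: connect_trans (connect1 h1) h3.
Qed.

Lemma anc_trans n (E : rel 'I_n) x y z :
  ancestor E x y -> ancestor E y z -> ancestor E x z.
Proof. exact: connect_trans. Qed.

Lemma down (P : nat -> Prop) k : P k ->
  exists j, j <= k /\ (forall i, j <= i <= k -> P i) /\ (j = 0 \/ ~ P j.-1).
Proof.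
elim: k => [|k IH] Pk.
  exists 0; split => //; split; last by left.
  by move=> i; rewrite leqn0 => /eqP ->.
case: (classic (P k)) => Hk.
  have [j [jk [Hj Hj']]] := IH Hk.
  exists j; split; first by lia.
  split => // i /andP[h1 h2].
  case: (ltngtP i k.+1) => h; last by rewrite h.
  - by apply: Hj; lia.
  - lia.
exists k.+1; split => //; split; last by right.
move=> i hi; have -> : i = k.+1 by lia. done.
Qed.

Lemma up (P : nat -> Prop) d : forall k, P k ->
  exists l, k <= l <= k + d /\ (forall i, k <= i <= l -> P i) /\ (l = k + d \/ ~ P l.+1).
Proof.
elim: d => [|d IH] k Pk.
  exists k; rewrite addn0 leqnn; split => //; split; last by left.
  by move=> i hi; have -> : i = k by lia.
case: (classic (P k.+1)) => Hk.
  have [l [hl [Hl Hl']]] := IH _ Hk.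
  exists l; split; first by lia.
  split; last by rewrite -addSnnS.
  move=> i hi; case: (ltngtP i k) => h; first lia.
  - by apply: Hl; lia.
  - by rewrite h.
exists k; rewrite leqnn leq_addr; split => //; split; last by right.
by move=> i hi; have -> : i = k by lia.
Qed.

Section Main.
Variables (n : nat) (E : rel 'I_n) (t : nat) (a : nat -> 'I_n).

Definition bad k := 1 <= k <= t /\ ~~ ancestor E (a k) (a 0) /\ ~~ ancestor E (a k) (a t.+1).
Definition D k := #|[set v | ancestor E (a k) v]|.
Definition minimal k := forall m, 1 <= m <= t -> ancestor E (a k) (a m) -> ancestor E (a m) (a k).

Lemma find_min N : forall k, D k <= N -> bad k -> exists k', bad k' /\ minimal k'.
Proof.
elim: N => [|N IH] k hD hb.
  exfalso; move: hD; rewrite leqn0 => /eqP; move/card0_eq => /(_ (a k)).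
  by rewrite inE /ancestor connect0.
case: (classic (minimal k)) => hm; first by exists k.
have [m hm'] := not_all_ex_not _ _ hm.
have [hmt hm2] := imply_to_and _ _ hm'.
have [hkm hmk] := imply_to_and _ _ hm2.
move/negP: hmk => hmk.
have hbm : bad m.
  move: hb => [h1 [h2 h3]]; split => //; split; apply/negP => h.
  - by move/negP: h2; apply; apply: anc_trans hkm h.
  - by move/negP: h3; apply; apply: anc_trans hkm h.
apply: (IH m) => //.
have : D m < D k.
  apply: proper_card; apply/properP; split.
    by apply/subsetP => v; rewrite !inE => h; apply: anc_trans hkm h.
  exists (a k); first by rewrite inE /ancestor connect0.
  by rewrite inE.
lia.
Qed.

End Main.

Theorem lemma3p12 (n : nat) (E : rel 'I_n) (t : nat) (a : nat -> 'I_n) :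
  1 <= n -> 1 <= t ->
  (forall i, i <= t -> padj E (a i) (a i.+1)) ->
  (forall i j, 2 <= i <= t.+1 -> j <= i - 2 -> ~~ padj E (a i) (a j)) ->
  (forall i, 1 <= i <= t -> ancestor E (a i) (a 0) || ancestor E (a i) (a t.+1))
  \/ (exists j l, [/\ 1 <= j, j <= l, l <= t &
        mut_excl E (fun i => a (j.-1 + i)) (l - j).+1]).
Proof.
move=> _ ht Hadj Hnadj.
case: (classic (forall i, 1 <= i <= t -> ancestor E (a i) (a 0) || ancestor E (a i) (a t.+1))) => H; first by left.
right.
have [k0 hq0] := not_all_ex_not _ _ H.
have [hk0t hk0'] := imply_to_and _ _ hq0.
have hb0 : bad E t a k0.
  split => //; move/negP: hk0'; rewrite negb_or => /andP[-> ->]; done.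
have [k [hb hmin]] := find_min (leqnn _) hb0.
move: (hb) => [hkt [hkz hkt1]].
pose C i := ancestor E (a k) (a i) /\ ancestor E (a i) (a k).
have Ck : C k by split; rewrite /ancestor connect0.
have [j' [hj' [Hj Hj']]] := down (P := fun i => C i.+1) (k := k.-1)
   ltac:(by have -> : k.-1.+1 = k by lia).
have [l [hl [Hl Hl']]] := up (P := C) (t - k) Ck.
set j := j'.+1.
have Hall : forall i, j <= i <= l -> C i.
  move=> i hi; case: (leqP i k) => h.
  - have -> : i = i.-1.+1 by lia. by apply: Hj; lia.
  - by apply: Hl; lia.
have anc_in : forall x y, j <= x <= l -> j <= y <= l -> ancestor E (a x) (a y).
  move=> x y hx hy; have [_ h1] := Hall x hx; have [h2 _] := Hall y hy.
  exact: anc_trans h1 h2.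
exists j, l; split; try lia.
split; first done.
split.
- move=> i hi /=; have -> : j.-1 + i = (j.-1 + i.-1).+1 by lia.
  apply: padj_sym; apply: Hadj; lia.
- move=> i i' hi hi' /=; apply: Hnadj; lia.
- move=> i hi /=; apply: anc_in; lia.
- move=> i hi /=; apply: anc_in; lia.
- have -> : j.-1 + 1 = j by lia.
  have [_ hjk] := Hall j ltac:(lia).
  split; apply/negP => h.
  + rewrite addn0 in h.
    have hkj : ancestor E (a k) (a j.-1).
      have [hkj _] := Hall j ltac:(lia). exact: anc_trans hkj h.
    case: (posnP j') => hj0.
    * have e : j.-1 = 0 by rewrite /j hj0.
      by rewrite e in hkj; rewrite hkj in hkz.
    * case: Hj' => [hj1|hnc]; first lia.
      apply: hnc; have e : j'.-1.+1 = j.-1 by rewrite /j; lia.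
      have hle : 1 <= j.-1 <= t by lia.
      rewrite e; split => //; exact: hmin hle hkj.
  + have e : j.-1 + (l - j).+2 = l.+1 by lia.
    rewrite e in h.
    have hkl : ancestor E (a k) (a l.+1).
      have [hkj _] := Hall j ltac:(lia). exact: anc_trans hkj h.
    case: Hl' => [hlt|hnc].
    * have e2 : l.+1 = t.+1 by lia.
      by rewrite e2 in hkl; rewrite hkl in hkt1.
    * apply: hnc.
      have hle : 1 <= l.+1 <= t.
        apply/andP; split => //; case: (ltngtP l t) => h'; try lia.
        by rewrite -h' hkl in hkt1.
      split => //; exact: hmin hle hkl.
Qed.
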